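(* Let $H=\mathbb{C}^n$, let $V\subset H$ be a real linear subspace, and let $\mathcal{F}=\{f_1,\ldots,f_m\}\subset H$ be a frame for $V$. The following statements are equivalent: (1) $\mathcal{F}$ is phase retrievable with respect to $V$; (2) $\ker\mathbb{A}\cap\big(\mathcal{S}^{1,0}(V)-\mathcal{S}^{1,0}(V)\big)=\{0\}$, where $\mathcal{S}^{1,0}(V)-\mathcal{S}^{1,0}(V)=\{xx^*-yy^*:\ x,y\in V\}$; (3) $\ker\mathbb{A}\cap\mathcal{S}^{1,1}(V)=\{0\}$; (4) $\ker\mathbb{A}\cap\big(\mathcal{S}^{2,0}(V)\cup\mathcal{S}^{1,1}(V)\cup\mathcal{S}^{0,2}(V)\big)=\{0\}$; (5) there do not exist vectors $u,v\in V$ with $[\![u,v]\!]\neq 0$ such that $\operatorname{Re}\big(\langle u,f_k\rangle\langle f_k,v\rangle\big)=0$ for all $1\le k\le m$.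
   Context: The inner product on $\mathbb{C}^n$ is $\langle x,y\rangle=\sum_j x_j\overline{y_j}$ (linear in the first argument), and $x^*$ denotes the conjugate transpose. $\mathcal{F}$ is a frame for $V$ if there is $A>0$ with $\sum_{k=1}^m|\langle x,f_k\rangle|^2\ge A\|x\|^2$ for all $x\in V$. Two vectors $x,y\in H$ are equivalent, $x\sim y$, if $x=cy$ for some $c\in\mathbb{C}$ with $|c|=1$. Define $\alpha(x)=(|\langle x,f_k\rangle|)_{k=1}^m\in\mathbb{R}^m$. $\mathcal{F}$ is phase retrievable with respect to $V$ if for all $x,y\in V$, $\alpha(x)=\alpha(y)$ implies $x\sim y$. $\operatorname{Sym}(\mathbb{C}^n)$ is the real vector space of self-adjoint $n\times n$ complex matrices with inner product $\langle T,S\rangle_{HS}=\operatorname{trace}(TS)$. For $u,v\in\mathbb{C}^n$, $[\![u,v]\!]=\frac12(uv^*+vu^* )\in\operatorname{Sym}(\mathbb{C}^n)$. The linear map $\mathbb{A}:\operatorname{Sym}(\mathbb{C}^n)\to\mathbb{R}^m$ is $(\mathbb{A}(T))_k=\langle Tf_k,f_k\rangle=\operatorname{trace}(T f_kf_k^* )$. As subsets of $\operatorname{Sym}(\mathbb{C}^n)$: $\mathcal{S}^{1,0}(V)=\{xx^*: x\in V\}$, $\mathcal{S}^{1,1}(V)=\{[\![u,v]\!]: u,v\in V\}$, $\mathcal{S}^{2,0}(V)=\{uu^*+vv^*: u,v\in V\}$, $\mathcal{S}^{0,2}(V)=\{-uu^*-vv^*: u,v\in V\}$. *)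

(* Defs.v *)
(* The complex field C^n is modelled by 'cV[C]_n for an
   arbitrary C : numClosedFieldType. *)
From HB Require Import structures.
From mathcomp Require Import all_boot all_order all_algebra.
Set Implicit Arguments. Unset Strict Implicit. Unset Printing Implicit Defensive.
Import Order.TTheory GRing.Theory Num.Theory.
Local Open Scope ring_scope.

Section Defs.
Variables (C : numClosedFieldType) (n m : nat).

Definition adj {p q : nat} (A : 'M[C]_(p, q)) : 'M[C]_(q, p) := (map_mx Num.conj A)^T.

Definition inner (x y : 'cV[C]_n) : C := \sum_(j < n) x j 0 * (y j 0)^*.

Definition real_subspace (V : pred 'cV[C]_n) : Prop :=
  [/\ 0 \in V,
      (forall x y, x \in V -> y \in V -> x + y \in V) &
      (forall (a : C) x, a \is Num.real -> x \in V -> a *: x \in V)].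

Definition is_frame (V : pred 'cV[C]_n) (f : 'I_m -> 'cV[C]_n) : Prop :=
  exists A : C, 0 < A /\
    forall x, x \in V -> A * inner x x <= \sum_(k < m) `|inner x (f k)| ^+ 2.

Definition equiv_vec (x y : 'cV[C]_n) : Prop := exists c : C, `|c| = 1 /\ x = c *: y.

Definition alpha (f : 'I_m -> 'cV[C]_n) (x : 'cV[C]_n) : 'rV[C]_m :=
  \row_k `|inner x (f k)|.

Definition phase_retrievable (V : pred 'cV[C]_n) (f : 'I_m -> 'cV[C]_n) : Prop :=
  forall x y, x \in V -> y \in V -> alpha f x = alpha f y -> equiv_vec x y.

Definition sympr (u v : 'cV[C]_n) : 'M[C]_n :=
  (2%:R)^-1 *: (u *m adj v + v *m adj u).

Definition Amap (f : 'I_m -> 'cV[C]_n) (T : 'M[C]_n) : 'rV[C]_m :=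
  \row_k \tr (T *m (f k *m adj (f k))).

Definition S10diff (V : pred 'cV[C]_n) (T : 'M[C]_n) : Prop :=
  exists x y, [/\ x \in V, y \in V & T = x *m adj x - y *m adj y].
Definition S11 (V : pred 'cV[C]_n) (T : 'M[C]_n) : Prop :=
  exists u v, [/\ u \in V, v \in V & T = sympr u v].
Definition S20 (V : pred 'cV[C]_n) (T : 'M[C]_n) : Prop :=
  exists u v, [/\ u \in V, v \in V & T = u *m adj u + v *m adj v].
Definition S02 (V : pred 'cV[C]_n) (T : 'M[C]_n) : Prop :=
  exists u v, [/\ u \in V, v \in V & T = - (u *m adj u) - v *m adj v].

Definition ker_meet_trivial (f : 'I_m -> 'cV[C]_n) (S : 'M[C]_n -> Prop) : Prop :=
  forall T, (Amap f T = 0 /\ S T) <-> T = 0.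

End Defs.

(* Main.v *)
Require Import Defs.
From HB Require Import structures.
From mathcomp Require Import all_boot all_order all_algebra.
From mathcomp Require Import ring.
Import Order.TTheory GRing.Theory Num.Theory.
Local Open Scope ring_scope.

Set Implicit Arguments.
Section H.
Variables (C : numClosedFieldType) (n m : nat).
Implicit Types (u v x y : 'cV[C]_n).

Lemma outerE u v i j : (u *m adj v) i j = u i 0 * (v j 0)^*.
Proof. by rewrite !mxE big_ord1 !mxE. Qed.

Lemma inner_conj x y : inner y x = (inner x y)^*.
Proof.
rewrite /inner rmorph_sum; apply: eq_bigr => j _.
by rewrite [RHS]rmorphM /= conjCK mulrC.
Qed.

Lemma Amap_outer (f : 'I_m -> 'cV[C]_n) u v k :
  Amap f (u *m adj v) 0 k = inner u (f k) * inner (f k) v.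
Proof.
rewrite !mxE /inner /mxtrace mulr_suml.
apply: eq_bigr => i _; rewrite mxE mulr_sumr; apply: eq_bigr => j _.
rewrite !outerE; ring.
Qed.
Lemma half_real : (2%:R^-1 : C) \is Num.real.
Proof. by apply: ger0_real; rewrite invr_ge0 ler0n. Qed.

Lemma conj_half : ((2%:R^-1 : C))^* = 2%:R^-1.
Proof. exact: conj_Creal half_real. Qed.

Lemma two_neq0 : (2%:R : C) != 0.
Proof. by rewrite pnatr_eq0. Qed.

Lemma Amap_sympr (f : 'I_m -> 'cV[C]_n) u v k :
  Amap f (sympr u v) 0 k = 'Re (inner u (f k) * inner (f k) v).
Proof.
have -> : Amap f (sympr u v) 0 k =
   2%:R^-1 * (Amap f (u *m adj v) 0 k + Amap f (v *m adj u) 0 k).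
  rewrite !mxE /sympr -scalemxAl mxtraceZ mulmxDl mxtraceD //.
rewrite !Amap_outer ReE (inner_conj (f k) v) (inner_conj (f k) u).
rewrite rmorphM /= conjCK.
by field.
Qed.

Lemma Amap0 (f : 'I_m -> 'cV[C]_n) : Amap f 0 = 0.
Proof. by apply/rowP => k; rewrite !mxE mul0mx mxtrace0. Qed.

Lemma AmapD (f : 'I_m -> 'cV[C]_n) A B : Amap f (A + B) = Amap f A + Amap f B.
Proof. by apply/rowP => k; rewrite !mxE mulmxDl mxtraceD. Qed.

Lemma AmapN (f : 'I_m -> 'cV[C]_n) A : Amap f (- A) = - Amap f A.
Proof. by apply/rowP => k; rewrite !mxE mulNmx raddfN. Qed.

Lemma AmapB (f : 'I_m -> 'cV[C]_n) A B : Amap f (A - B) = Amap f A - Amap f B.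
Proof. by rewrite AmapD AmapN. Qed.

Lemma Amap_sq (f : 'I_m -> 'cV[C]_n) u k :
  Amap f (u *m adj u) 0 k = `|inner u (f k)| ^+ 2.
Proof. by rewrite Amap_outer normCK -(inner_conj u (f k)). Qed.

Lemma S10_S11 (V : pred 'cV[C]_n) T : real_subspace V ->
  S10diff V T <-> S11 V T.
Proof.
case=> V0 VD VZ.
have VN : forall x, x \in V -> - x \in V.
  by move=> x Vx; rewrite -scaleN1r; apply: VZ => //; rewrite realN real1.
split.
  case=> x [y [Vx Vy ->]]; exists (x + y), (x - y); split; [by apply: VD|by apply: VD; rewrite ?VN|].
  apply/matrixP => i j; rewrite /sympr !(mxE, big_ord1) !(rmorphD, rmorphN) /=.
  by field.
case=> u [v [Vu Vv ->]].
exists (2%:R^-1 *: (u + v)), (2%:R^-1 *: (u - v)); split.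
- by apply: VZ; [exact: half_real| exact: VD].
- by apply: VZ; [exact: half_real| apply: VD; rewrite ?VN].
apply/matrixP => i j; rewrite /sympr !(mxE, big_ord1) !(rmorphD, rmorphN, rmorphM) /= !conj_half.
by field.
Qed.

Lemma frame_zero (V : pred 'cV[C]_n) (f : 'I_m -> 'cV[C]_n) u :
  is_frame V f -> u \in V -> (forall k, inner u (f k) = 0) -> u = 0.
Proof.
case=> A [A0 HA] Vu Hk.
have := HA u Vu; rewrite big1 => [|k _]; last by rewrite Hk normr0 expr0n.
rewrite pmulr_rle0 // => Hle.
have Hge : 0 <= inner u u by apply: sumr_ge0 => j _; exact: mul_conjC_ge0.
have H0 : inner u u = 0 by apply/eqP; rewrite eq_le Hle Hge.
have Hj := psumr_eq0P (fun j _ => mul_conjC_ge0 (u j 0)) H0.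
apply/matrixP => i j; rewrite (ord1 j) mxE.
by apply/eqP; rewrite -mul_conjC_eq0; apply/eqP; exact: Hj.
Qed.

Lemma equiv_outer x y : equiv_vec x y -> x *m adj x = y *m adj y.
Proof.
case=> c [c1 ->]; apply/matrixP => i j; rewrite !outerE !mxE rmorphM /=.
have cc : c * c^* = 1 by rewrite -normCK c1 expr1n.
by transitivity (c * c^* * (y i 0 * (y j 0)^*)); [ring | rewrite cc mul1r].
Qed.

Lemma outer_equiv x y : x *m adj x = y *m adj y -> equiv_vec x y.
Proof.
move=> E.
have Eij i j : x i 0 * (x j 0)^* = y i 0 * (y j 0)^*.
  by rewrite -!outerE E.
case: (pickP (fun j => y j 0 != 0)) => [j /= yj | hy].
  have xj : x j 0 != 0.
    apply/negP => /eqP x0; move: (Eij j j); rewrite x0 mul0r => /esym/eqP.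
    by rewrite mul_conjC_eq0 (negbTE yj).
  exists ((y j 0)^* / (x j 0)^*); split.
    have nxy : `|x j 0| = `|y j 0|.
      apply/eqP; rewrite -(@eqrXn2 _ 2) ?normr_ge0 //.
      by rewrite !normCK Eij.
    by rewrite normrM normfV !norm_conjC nxy divff // normr_eq0.
  apply/matrixP => i k; rewrite (ord1 k) mxE.
  have xj' : (x j 0)^* != 0 by rewrite conjC_eq0.
  apply: (mulIf xj'); rewrite Eij; field.
  done.
exists 1; split; first exact: normr1.
have y0 i : y i 0 = 0 by apply/eqP; have := hy i; rewrite /= => /negbFE.
apply/matrixP => i k; rewrite (ord1 k) !mxE y0 mulr0.
by apply/eqP; rewrite -mul_conjC_eq0 Eij y0 mul0r.
Qed.

Lemma rowB (a b : 'rV[C]_m) k : (a - b) 0 k = a 0 k - b 0 k.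
Proof. by rewrite !mxE. Qed.
Lemma rowD (a b : 'rV[C]_m) k : (a + b) 0 k = a 0 k + b 0 k.
Proof. by rewrite !mxE. Qed.
Lemma rowN (a : 'rV[C]_m) k : (- a) 0 k = - a 0 k.
Proof. by rewrite !mxE. Qed.
Lemma row0 k : (0 : 'rV[C]_m) 0 k = 0.
Proof. by rewrite !mxE. Qed.

Lemma ker_trivP (f : 'I_m -> 'cV[C]_n) (S : 'M[C]_n -> Prop) : S 0 ->
  ker_meet_trivial f S <-> (forall T, S T -> Amap f T = 0 -> T = 0).
Proof.
move=> S0; split.
  by move=> H T ST AT; apply/H.
move=> H T; split; first by case=> AT ST; exact: H.
by move=> ->; split; [exact: Amap0|].
Qed.

Lemma sq_sum0 (a b : C) : `|a| ^+ 2 + `|b| ^+ 2 = 0 -> a = 0 /\ b = 0.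
Proof.
move/eqP; rewrite paddr_eq0 ?exprn_ge0 ?normr_ge0 // => /andP[].
by rewrite !expf_eq0 /= !normr_eq0 => /eqP -> /eqP ->.
Qed.

End H.
Unset Implicit Arguments.

Theorem theorem3p1 (C : numClosedFieldType) (n m : nat)
    (V : pred 'cV[C]_n) (f : 'I_m -> 'cV[C]_n) :
  real_subspace V -> is_frame V f ->
  [<-> phase_retrievable V f;
       ker_meet_trivial f (S10diff V);
       ker_meet_trivial f (S11 V);
       ker_meet_trivial f (fun T => S20 V T \/ S11 V T \/ S02 V T);
       ~ (exists u v, [/\ u \in V, v \in V, sympr u v != 0 &
            forall k : 'I_m, 'Re (inner u (f k) * inner (f k) v) = 0])].
Proof.
move=> HV Hf; have [V0 VD VZ] := HV.
have S10_0 : S10diff V 0 by exists 0, 0; rewrite subrr.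
have S11_0 : S11 V 0.
  by exists 0, 0; split => //; rewrite /sympr !mul0mx addr0 scaler0.
have U_0 : (fun T => S20 V T \/ S11 V T \/ S02 V T) 0 by right; left.
have e01 : phase_retrievable V f <-> ker_meet_trivial f (S10diff V).
  rewrite ker_trivP //; split.
    move=> H T [x [y [Vx Vy ->]]] AT.
    have Hxy : alpha f x = alpha f y.
      apply/rowP => k; rewrite !mxE.
      have := congr1 (fun r : 'rV[C]_m => r 0 k) AT; rewrite /= AmapB rowB !Amap_sq row0.
      move/eqP; rewrite subr_eq0 eqrXn2 ?normr_ge0 //; exact: eqP.
    by rewrite (equiv_outer (H x y Vx Vy Hxy)) subrr.
  move=> H x y Vx Vy Ha; apply: outer_equiv; apply/eqP; rewrite -subr_eq0; apply/eqP.
  apply: H; first by exists x, y.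
  apply/rowP => k; rewrite AmapB rowB !Amap_sq row0.
  have := congr1 (fun r : 'rV[C]_m => r 0 k) Ha; rewrite /= !mxE => ->; exact: subrr.
have e12 : ker_meet_trivial f (S10diff V) <-> ker_meet_trivial f (S11 V).
  rewrite !ker_trivP //; split => H T ST; apply: H.
    by apply/(S10_S11 _ HV).
  by apply/(S10_S11 _ HV).
have e23 : ker_meet_trivial f (S11 V) <->
     ker_meet_trivial f (fun T => S20 V T \/ S11 V T \/ S02 V T).
  rewrite !ker_trivP //; split => H; last by move=> T ST; apply: H; right; left.
  move=> T [[u [v [Vu Vv ->]]]|[ST|[u [v [Vu Vv ->]]]]] AT; last 2 first.
  - exact: H.
  - have Hk k : inner u (f k) = 0 /\ inner v (f k) = 0.
      apply: sq_sum0; have := congr1 (fun r : 'rV[C]_m => r 0 k) AT.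
      rewrite /= AmapB AmapN rowB rowN !Amap_sq row0 -opprD => /eqP.
      by rewrite oppr_eq0 => /eqP.
    rewrite (frame_zero Hf Vu (fun k => proj1 (Hk k))).
    rewrite (frame_zero Hf Vv (fun k => proj2 (Hk k))).
    by rewrite !mul0mx oppr0 addr0.
  have Hk k : inner u (f k) = 0 /\ inner v (f k) = 0.
    apply: sq_sum0; have := congr1 (fun r : 'rV[C]_m => r 0 k) AT.
    by rewrite /= AmapD rowD !Amap_sq row0.
  rewrite (frame_zero Hf Vu (fun k => proj1 (Hk k))).
  rewrite (frame_zero Hf Vv (fun k => proj2 (Hk k))).
  by rewrite mul0mx addr0.
have e24 : ker_meet_trivial f (S11 V) <->
   ~ (exists u v, [/\ u \in V, v \in V, sympr u v != 0 &
            forall k : 'I_m, 'Re (inner u (f k) * inner (f k) v) = 0]).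
  rewrite ker_trivP //; split.
    move=> H [u [v [Vu Vv nz HRe]]]; move/eqP: nz; apply; apply: H.
      by exists u, v.
    by apply/rowP => k; rewrite Amap_sympr HRe row0.
  move=> H T [u [v [Vu Vv ->]]] AT.
  case: (eqVneq (sympr u v) 0) => // nz; exfalso; apply: H.
  exists u, v; split => // k; rewrite -Amap_sympr.
  by have := congr1 (fun r : 'rV[C]_m => r 0 k) AT => /= ->; rewrite row0.
tfae => H.
- by apply/e01.
- by apply/e12.
- by apply/e23.
- by apply/e24; apply/e23.
- by apply/e01; apply/e12; apply/e24.
Qed.
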